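(* Let $\gamma\ge 0$ and define $R(A)=\mathrm{vol}_g(A)+\nu_S\,\mathrm{unit}(A)+\gamma\,\mathrm{pen}(A)$ for $A\subseteq V'$. Use the convention $x/0=+\infty$ for $x>0$. 1. For every $f\in\mathbb{R}^m_+\setminus\{0\}$, $$\frac{R^L(f)}{\mathrm{assoc}_S^L(f)}\ \ge\ \min_{i=1,\dots,m}\frac{R(A_i)}{\mathrm{assoc}_S(A_i)},\qquad A_i=\{j\in V': f_j\ge f_i\}.$$ 2. Consequently, $$\min_{f\in\mathbb{R}^m_+\setminus\{0\}}\frac{R^L(f)}{\mathrm{assoc}^L_S(f)}=\min_{\emptyset\ne A\subseteq V'}\frac{R(A)}{\mathrm{assoc}_S(A)},$$ and the minimum on the left is attained. 3. For any minimizer $f^*$ of the left-hand problem, a set $A^*$ chosen among the thresholded sets $A_i=\{j\in V':f^*_j\ge f^*_i\}$, $i=1,\dots,m$, so as to minimize $R(A_i)/\mathrm{assoc}_S(A_i)$, is a minimizer of the right-hand (set) problem.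
   Context: Let $V$ be a finite vertex set with symmetric nonnegative weights $w_{ij}=w_{ji}\ge0$ and $w_{ii}=0$. - $d_i=\sum_{j\in V}w_{ij}$, and $\mathrm{vol}_h(A)=\sum_{i\in A}h_i$. - $\mathrm{assoc}(A)=\sum_{i,j\in A}w_{ij}$ (ordered pairs), and $\mathrm{cut}(A,B)=\sum_{i\in A,j\in B}w_{ij}$. - Fix $S\subseteq V$, $V'=V\setminus S$, $m=|V'|$, and identify $V'$ with $\{1,\dots,m\}$. - $d^S_i=\sum_{j\in S}w_{ij}$, $g:V\to(0,\infty)$, $\mu_S=\mathrm{assoc}(S)$, $\nu_S=\mathrm{vol}_g(S)$. - $\mathrm{unit}(A)=1$ if $A\ne\emptyset$ and $0$ otherwise. - $\mathrm{assoc}_S(A)=\mathrm{vol}_d(A)-\mathrm{cut}(A,V'\setminus A)+\mathrm{vol}_{d^S}(A)+\mu_S\,\mathrm{unit}(A)$ for $A\subseteq V'$. Constraint data: $M_1,\dots,M_p\in[0,\infty)^V$; reals $k_j,l_j$; a symmetric $\mathrm{dist}:V\times V\to[0,\infty)$ with $\mathrm{dist}(u,u)=0$; and $d_0\ge0$. Penalty: $\mathrm{pen}(\emptyset)=0$, and for $A\ne\emptyset$, $$\mathrm{pen}(A)=\sum_{j}\max\{0,\mathrm{vol}_{M_j}(A)-l_j\}+\sum_j\max\{0,k_j-\mathrm{vol}_{M_j}(A)\}+\sum_{u,v\in A}\max\{0,\mathrm{dist}(u,v)-d_0\}.$$ Lovasz extension: for a set function $F:2^{V'}\to\mathbb{R}$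 with $F(\emptyset)=0$ and $f\in\mathbb{R}^m$, choose a permutation $\pi$ with $f_{\pi(1)}\le\dots\le f_{\pi(m)}$ and let $B_i=\{\pi(i),\dots,\pi(m)\}$. Then $$F^L(f)=\sum_{i=1}^{m-1}F(B_{i+1})\,(f_{\pi(i+1)}-f_{\pi(i)})+F(V')\,f_{\pi(1)}.$$ *)

(* Defs.v *)
From HB Require Import structures.
From mathcomp Require Import all_boot all_order all_algebra.
Set Implicit Arguments. Unset Strict Implicit. Unset Printing Implicit Defensive.
Import Order.TTheory GRing.Theory Num.Theory.
Local Open Scope ring_scope.

Section Defs.
Variables (R : realFieldType) (V : finType).

Definition vol (h : V -> R) (A : {set V}) : R := \sum_(i in A) h i.
Definition degw (w : V -> V -> R) (i : V) : R := \sum_j w i j.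
Definition degS (w : V -> V -> R) (S : {set V}) (i : V) : R := \sum_(j in S) w i j.
Definition assoc (w : V -> V -> R) (A : {set V}) : R :=
  \sum_(i in A) \sum_(j in A) w i j.
Definition cut (w : V -> V -> R) (A B : {set V}) : R :=
  \sum_(i in A) \sum_(j in B) w i j.
Definition unitS (A : {set V}) : R := if A == set0 then 0 else 1.

Definition Vp (S : {set V}) := {x : V | x \in ~: S}.
Definition liftS (S : {set V}) (A : {set Vp S}) : {set V} := [set val x | x in A].

Definition assocS (w : V -> V -> R) (S : {set V}) (A : {set Vp S}) : R :=
  vol (degw w) (liftS A) - cut w (liftS A) (~: S :\: liftS A)
  + vol (degS w S) (liftS A) + assoc w S * unitS (liftS A).

Definition pen (p : nat) (M : 'I_p -> V -> R) (k l : 'I_p -> R)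
  (dist : V -> V -> R) (d0 : R) (A : {set V}) : R :=
  if A == set0 then 0 else
    \sum_(j < p) Num.max 0 (vol (M j) A - l j)
  + \sum_(j < p) Num.max 0 (k j - vol (M j) A)
  + \sum_(u in A) \sum_(v in A) Num.max 0 (dist u v - d0).

(* R(A) = vol_g(A) + nu_S unit(A) + gamma pen(A), for A subset of V' *)
Definition Rset (g : V -> R) (S : {set V}) (gamma : R) (p : nat)
  (M : 'I_p -> V -> R) (k l : 'I_p -> R) (dist : V -> V -> R) (d0 : R)
  (A : {set Vp S}) : R :=
  vol g (liftS A) + vol g S * unitS (liftS A) + gamma * pen M k l dist d0 (liftS A).
End Defs.

Section Lovasz.
Variables (R : realFieldType) (T : finType).
(* Lovasz extension, with the permutation pi obtained by (stably) sorting
   the elements of T by increasing value of f; s = [pi(1); ...; pi(m)]. *)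
Definition lovasz (F : {set T} -> R) (f : T -> R) : R :=
  let s := sort (fun x y => f x <= f y) (enum T) in
  let fs := map f s in
  \sum_(i < (size s).-1) F [set x in drop i.+1 s] * (fs`_i.+1 - fs`_i)
  + F setT * fs`_0.
End Lovasz.

(* Extended ratios: None stands for +infinity. x/0 := +infinity. *)
Definition xdiv (R : realFieldType) (x y : R) : option R :=
  if y == 0 then None else Some (x / y).
Definition xle (R : realFieldType) (a b : option R) : bool :=
  match a, b with
  | _, None => true
  | None, Some _ => false
  | Some x, Some y => x <= y
  end.

Definition thr (T : finType) (R : realFieldType) (f : T -> R) (i : T) : {set T} :=
  [set j | f i <= f j].

(* Main.v *)
Require Import Defs.
From HB Require Import structures.
From mathcomp Require Import all_boot all_order all_algebra.
From mathcomp Require Import zify ring lra.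
Import Order.TTheory GRing.Theory Num.Theory.
Local Open Scope ring_scope.

Lemma in_drop_nth (T : eqType) (s : seq T) x0 m k : uniq s -> (k < size s)%N ->
  (nth x0 s k \in drop m s) = (m <= k)%N.
Proof.
move=> us ks; case: (leqP m k) => h.
  have hk : (k - m < size (drop m s))%N by rewrite size_drop; lia.
  by have := mem_nth x0 hk; rewrite nth_drop subnKC.
apply/negbTE/negP => /(nthP x0) [j hj e].
rewrite nth_drop in e; rewrite size_drop in hj.
have := index_uniq x0 ks us; rewrite -e index_uniq //; lia.
Qed.

Section L.
Variables (R : realFieldType) (T : finType).
Definition srt (f : T -> R) := sort (fun x y => f x <= f y) (enum T).
Lemma srt_sorted f : sorted (fun x y => f x <= f y) (srt f).
Proof. by apply: sort_sorted => x y; exact: le_total. Qed.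
Lemma size_srt f : size (srt f) = #|T|.
Proof. by rewrite size_sort cardT. Qed.
Lemma uniq_srt f : uniq (srt f).
Proof. by rewrite sort_uniq enum_uniq. Qed.
Lemma mem_srt f x : x \in srt f.
Proof. by rewrite mem_sort mem_enum. Qed.
Lemma srt_le f x0 i j : (i <= j)%N -> (j < #|T|)%N ->
  f (nth x0 (srt f) i) <= f (nth x0 (srt f) j).
Proof.
move=> ij jn; apply: (sorted_leq_nth (leT := fun x y => f x <= f y)) => //.
- by move=> y x z; exact: le_trans.
- exact: srt_sorted.
- by rewrite inE size_srt; lia.
- by rewrite inE size_srt.
Qed.
Definition cf f (i : nat) : R := let fs := map f (srt f) in
  if i is j.+1 then fs`_j.+1 - fs`_j else fs`_0.
Definition Xs f (i : nat) : {set T} :=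
  if i is j.+1 then [set x in drop j.+1 (srt f)] else setT.

Lemma decomp F f : (0 < #|T|)%N -> lovasz F f = \sum_(i < #|T|) F (Xs f i) * cf f i.
Proof.
move=> n0; rewrite /lovasz -/(srt f) size_srt.
case: #|T| n0 => // n _; rewrite big_ord_recl /= addrC.
by [].
Qed.

Lemma cfE f x0 i : (i < #|T|)%N -> cf f i =
  if i is j.+1 then f (nth x0 (srt f) j.+1) - f (nth x0 (srt f) j) else f (nth x0 (srt f) 0).
Proof.
move=> hi; rewrite /cf; case: i hi => [|j] hj.
  by rewrite (nth_map x0) // size_srt.
by rewrite !(nth_map x0) // size_srt //; lia.
Qed.

Lemma cf_ge0 f i : (forall x, 0 <= f x) -> (i < #|T|)%N -> 0 <= cf f i.
Proof.
move=> f0 hi; have : (0 < #|T|)%N by lia.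
case/card_gt0P => x0 _; rewrite (cfE f x0 i hi); case: i hi => [|j] hj //.
by rewrite subr_ge0 srt_le.
Qed.

Lemma Xs_thr f x0 i : (i < #|T|)%N -> cf f i != 0 -> Xs f i = thr f (nth x0 (srt f) i).
Proof.
move=> hi; rewrite (cfE f x0 i hi) => hc; apply/setP => x; rewrite /thr !inE.
have hk : (index x (srt f) < #|T|)%N by rewrite -(size_srt f) index_mem mem_srt.
rewrite -(nth_index x0 (mem_srt f x)).
case: i hi hc => [|j] hj hc; rewrite /Xs inE; first by rewrite srt_le.
rewrite in_drop_nth ?uniq_srt ?size_srt //.
case: (leqP j.+1 (index x (srt f))) => h; first by rewrite srt_le.
apply/esym/negbTE; rewrite -ltNge.
have h1 : f (nth x0 (srt f) (index x (srt f))) <= f (nth x0 (srt f) j).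
  by apply: srt_le; lia.
apply: le_lt_trans h1 _.
rewrite lt_def; rewrite subr_eq0 in hc; rewrite hc srt_le //; lia.
Qed.
Lemma sum_cf f x0 m : (m < #|T|)%N -> \sum_(i < m.+1) cf f i = f (nth x0 (srt f) m).
Proof.
elim: m => [|m IH] hm; first by rewrite big_ord1 (cfE f x0 0 hm).
rewrite big_ord_recr IH; last lia.
change (f (nth x0 (srt f) m) + cf f m.+1 = f (nth x0 (srt f) m.+1)).
by rewrite (cfE f x0 m.+1 hm) addrC subrK.
Qed.

Lemma lovasz_ind (F : {set T} -> R) (A : {set T}) : A != set0 ->
  lovasz F (fun x => if x \in A then 1 else 0 : R) = F A.
Proof.
set f := fun x => if x \in A then 1 else 0 : R.
case/set0Pn => a aA.
have n0 : (0 < #|T|)%N by apply/card_gt0P; exists a.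
have f0 : forall x, 0 <= f x by move=> x; rewrite /f; case: (x \in A).
rewrite decomp //.
transitivity (\sum_(i < #|T|) F A * cf f i).
  apply: eq_bigr => i _; case: (eqVneq (cf f i) 0) => [->|hc]; first by rewrite !mulr0.
  rewrite (Xs_thr f a i (ltn_ord i) hc); congr (F _ * _).
  have sA : nth a (srt f) i \in A.
    apply/negPn/negP => hn; move: hc; rewrite (cfE f a i (ltn_ord i)).
    have fz : f (nth a (srt f) i) = 0 by rewrite /f (negbTE hn).
    case: (nat_of_ord i) (ltn_ord i) fz => [|j] hj fz; first by rewrite fz eqxx.
    rewrite fz; have h1 := f0 (nth a (srt f) j).
    have h2 : f (nth a (srt f) j) <= f (nth a (srt f) j.+1) by apply: srt_le.
    rewrite fz in h2; have -> : f (nth a (srt f) j) = 0 by apply/le_anti; rewrite h1 h2.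
    by rewrite subrr eqxx.
  apply/setP => x; rewrite /thr inE /f sA; case: (x \in A); first by rewrite lexx.
  by rewrite ler10.
rewrite -mulr_sumr; have e : #|T| = (#|T|.-1).+1 by lia.
rewrite e (sum_cf f a) -?e; last by lia.
have : f a <= f (nth a (srt f) #|T|.-1).
  rewrite -{1}(nth_index a (mem_srt f a)); apply: srt_le; last by lia.
  have := index_mem a (srt f); rewrite mem_srt size_srt; lia.
rewrite {1}/f aA; move: (nth _ _ _) => y; rewrite /f; case: (y \in A) => //.
by rewrite mulr1.
by rewrite ler10.
Qed.
End L.
Arguments srt {R T}. Arguments cf {R T}. Arguments Xs {R T}.
Arguments decomp {R T}. Arguments cf_ge0 {R T}. Arguments Xs_thr {R T}.
Arguments lovasz_ind {R T}.

Lemma ratio_lemma (R : realFieldType) n (c a b : 'I_n -> R) :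
 (forall i, 0 <= c i) -> (forall i, 0 <= a i) -> (forall i, 0 <= b i) ->
 \sum_i b i * c i != 0 ->
 exists i, c i != 0 /\
   xle (xdiv (a i) (b i)) (xdiv (\sum_i a i * c i) (\sum_i b i * c i)).
Proof.
move=> c0 a0 b0 hB.
set A := \sum_i a i * c i; set B := \sum_i b i * c i.
have Bpos : 0 < B by rewrite lt_def hB sumr_ge0 // => i _; rewrite mulr_ge0.
set q := A / B.
case: (boolP [exists i, (c i != 0) && xle (xdiv (a i) (b i)) (Some q)]).
  move/existsP => [i /andP[h1 h2]]; exists i; split => //.
  by rewrite /xdiv (negbTE hB).
move/existsPn => H; exfalso.
have d0 : forall i, 0 <= a i * c i - q * (b i * c i).
  move=> i; have := H i; case: (eqVneq (c i) 0) => [->|ci] /=; first by rewrite !mulr0 subr0.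
  rewrite /xdiv; case: (eqVneq (b i) 0) => [->|bi] /=; first by rewrite !mul0r mulr0 subr0 mulr_ge0.
  rewrite -ltNge => hq.
  have bp : 0 < b i by rewrite lt_def bi b0.
  have cp : 0 < c i by rewrite lt_def ci c0.
  rewrite ltr_pdivlMr // in hq.
  rewrite mulrA -mulrBl mulr_ge0 // subr_ge0 ltW //.
have [i0 hi0] : exists i0, b i0 * c i0 != 0.
  case: (boolP [exists i, b i * c i != 0]) => [/existsP//|/existsPn h].
  by move: hB; rewrite /B big1 ?eqxx // => i _; apply/eqP; have := h i; rewrite negbK.
have d1 : 0 < a i0 * c i0 - q * (b i0 * c i0).
  have := H i0; move: hi0; rewrite mulf_eq0 negb_or => /andP[bi ci] /=.
  rewrite /xdiv (negbTE bi) ci /= -ltNge => hq.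
  have bp : 0 < b i0 by rewrite lt_def bi b0.
  have cp : 0 < c i0 by rewrite lt_def ci c0.
  rewrite ltr_pdivlMr // in hq.
  rewrite mulrA -mulrBl mulr_gt0 // subr_gt0 //.
have e : \sum_i (a i * c i - q * (b i * c i)) = A - q * B.
  by rewrite sumrB -mulr_sumr.
have : 0 < \sum_i (a i * c i - q * (b i * c i)).
  rewrite (bigD1 i0) //=.
  have : 0 <= \sum_(i | i != i0) (a i * c i - q * (b i * c i)) by rewrite sumr_ge0.
  lra.
rewrite e /q divfK // subrr ltxx //.
Qed.

Lemma xle_refl (R : realFieldType) (a : option R) : xle a a.
Proof. by case: a => //= x; rewrite lexx. Qed.
Lemma xle_trans (R : realFieldType) (a b c : option R) : xle a b -> xle b c -> xle a c.
Proof. by case: a; case: b; case: c => //= x y z; apply: le_trans. Qed.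
Lemma xle_total (R : realFieldType) (a b : option R) : xle a b || xle b a.
Proof. by case: a; case: b => //= x y; apply: le_total. Qed.

Arguments xle_refl {R}. Arguments xle_trans {R a b c}. Arguments xle_total {R}.

Lemma xargmin (X : eqType) (R : realFieldType) (r : X -> option R) (l : seq X) x :
  x \in l -> exists2 a, a \in l & forall b, b \in l -> xle (r a) (r b).
Proof.
elim: l x => // y l IH x _.
case: l IH => [|z l] IH.
  by exists y; rewrite ?mem_head // => b; rewrite inE => /eqP->; apply: xle_refl.
have [a al ha] := IH z (mem_head _ _).
case/orP: (xle_total (r a) (r y)) => h.
  exists a; first by rewrite inE al orbT.
  by move=> b; rewrite inE => /orP[/eqP->|/ha].
exists y; first exact: mem_head.
move=> b; rewrite inE => /orP[/eqP->|/ha]; first exact: xle_refl.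
exact: xle_trans.
Qed.

Lemma part1 (R : realFieldType) (T : finType) (F1 F2 : {set T} -> R) (f : T -> R) :
  (forall A, 0 <= F1 A) -> (forall A, 0 <= F2 A) ->
  (forall j, 0 <= f j) -> (exists j, f j != 0) ->
  exists i, xle (xdiv (F1 (thr f i)) (F2 (thr f i))) (xdiv (lovasz F1 f) (lovasz F2 f)).
Proof.
move=> F10 F20 f0 [x0 _].
have n0 : (0 < #|T|)%N by apply/card_gt0P; exists x0.
rewrite !decomp //.
case: (eqVneq (\sum_(i < #|T|) F2 (Xs f i) * cf f i) 0) => [->|hB].
  by exists x0; rewrite /xdiv eqxx; case: (_ == 0).
have [i [hc hle]] := @ratio_lemma R #|T| (fun i : 'I_#|T| => cf f i)
   (fun i => F1 (Xs f i)) (fun i => F2 (Xs f i))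
   (fun i => cf_ge0 f i f0 (ltn_ord i)) (fun i => F10 _) (fun i => F20 _) hB.
exists (nth x0 (srt f) i).
by rewrite -(Xs_thr f x0 i (ltn_ord i) hc).
Qed.

Theorem theorem2 (R : realFieldType) (V : finType) (w : V -> V -> R)
  (w_sym : forall i j, w i j = w j i) (w_ge0 : forall i j, 0 <= w i j)
  (w_diag : forall i, w i i = 0)
  (S : {set V}) (g : V -> R) (g_pos : forall i, 0 < g i)
  (p : nat) (M : 'I_p -> V -> R) (M_ge0 : forall j v, 0 <= M j v)
  (k l : 'I_p -> R) (dist : V -> V -> R)
  (dist_sym : forall u v, dist u v = dist v u) (dist_ge0 : forall u v, 0 <= dist u v)
  (dist_diag : forall u, dist u u = 0) (d0 : R) (d0_ge0 : 0 <= d0)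
  (gamma : R) (gamma_ge0 : 0 <= gamma) :
  let RR := Rset g gamma M k l dist d0 in
  let AS := assocS w (S := S) in
  let ratioL (f : Vp S -> R) := xdiv (lovasz RR f) (lovasz AS f) in
  let ratioS (A : {set Vp S}) := xdiv (RR A) (AS A) in
  let admissible (f : Vp S -> R) := (forall j, 0 <= f j) /\ (exists j, f j != 0) in
  (* 1. *)
  (forall f, admissible f ->
     exists i, xle (ratioS (thr f i)) (ratioL f)) /\
  (* 2. (V' nonempty) *)
  (S != setT ->
     exists fstar, admissible fstar /\
       (forall f, admissible f -> xle (ratioL fstar) (ratioL f)) /\
       exists Astar : {set Vp S}, Astar != set0 /\
         (forall A, A != set0 -> xle (ratioS Astar) (ratioS A)) /\
         ratioL fstar = ratioS Astar) /\
  (* 3. *)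
  (forall fstar, admissible fstar ->
     (forall f, admissible f -> xle (ratioL fstar) (ratioL f)) ->
     forall i, (forall i', xle (ratioS (thr fstar i)) (ratioS (thr fstar i'))) ->
     forall A : {set Vp S}, A != set0 -> xle (ratioS (thr fstar i)) (ratioS A)).
Proof.
move=> RR AS ratioL ratioS adm.
have vol_ge0 : forall (h : V -> R) X, (forall v, 0 <= h v) -> 0 <= vol h X.
  by move=> h X h0; rewrite /vol sumr_ge0.
have unit_ge0 : forall X : {set V}, 0 <= unitS R X by move=> X; rewrite /unitS; case: ifP.
have RR0 : forall A, 0 <= RR A.
  move=> A; rewrite /RR /Rset.
  have h1 := vol_ge0 g (liftS A) (fun v => ltW (g_pos v)).
  have h2 : 0 <= vol g S * unitS R (liftS A).
    by rewrite mulr_ge0 // vol_ge0 // => v; exact: ltW.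
  have h3 : 0 <= gamma * pen M k l dist d0 (liftS A).
    rewrite mulr_ge0 // /pen; case: ifP => // _.
    rewrite !addr_ge0 // sumr_ge0 // => [j _|j _|u _]; rewrite ?le_max ?lexx //.
    by rewrite sumr_ge0 // => v _; rewrite le_max lexx.
  lra.
have AS0 : forall A, 0 <= AS A.
  move=> A; rewrite /AS /assocS.
  set L := liftS A; set B := ~: S :\: L.
  have h1 : cut w L B <= vol (degw w) L.
    rewrite /cut /vol /degw; apply: ler_sum => i _.
    rewrite [X in _ <= X](bigID (fun j => j \in B)) /= lerDl sumr_ge0 //.
  have h2 : 0 <= vol (degS w S) L by rewrite vol_ge0 // => v; rewrite sumr_ge0.
  have h3 : 0 <= assoc w S * unitS R L.
    by rewrite mulr_ge0 // /assoc sumr_ge0 // => i _; rewrite sumr_ge0.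
  lra.
have P1 : forall f, adm f -> exists i, xle (ratioS (thr f i)) (ratioL f).
  by move=> f [f0 fj]; exact: part1.
set ind := fun (A : {set Vp S}) (x : Vp S) => if x \in A then 1 else 0 : R.
have Ind : forall A, A != set0 -> ratioL (ind A) = ratioS A.
  by move=> A hA; rewrite /ratioL /ratioS /ind !lovasz_ind.
have adm_ind : forall A, A != set0 -> adm (ind A).
  move=> A /set0Pn [a aA]; split.
    by move=> j; rewrite /ind; case: (j \in A).
  by exists a; rewrite /ind aA oner_neq0.
have thr_n0 : forall (f : Vp S -> R) i, thr f i != set0.
  by move=> f i; apply/set0Pn; exists i; rewrite /thr inE.
split; first exact: P1.
split.
  move=> hS.
  have [x hx] : exists x, x \in ~: S.
    apply/existsP; apply: contraR hS => /existsPn h; apply/eqP/setP => y.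
    by have := h y; rewrite !inE negbK => ->.
  pose v : Vp S := exist _ x hx.
  have hin : [set v] \in [seq A <- enum {set Vp S} | A != set0].
    by rewrite mem_filter mem_enum andbT; apply/set0Pn; exists v; rewrite inE.
  have [As Asl hAs] := @xargmin _ R ratioS _ _ hin.
  have As0 : As != set0 by move: Asl; rewrite mem_filter => /andP[].
  have hmin : forall A, A != set0 -> xle (ratioS As) (ratioS A).
    by move=> A hA; apply: hAs; rewrite mem_filter hA mem_enum.
  exists (ind As); split; first exact: adm_ind.
  split.
    move=> f hf; have [i hi] := P1 f hf.
    by rewrite Ind //; apply: xle_trans (hmin _ (thr_n0 f i)) hi.
  by exists As; split => //; split => //; rewrite Ind.
move=> fs hfs hmin i hi A hA.
have := hmin _ (adm_ind A hA); rewrite Ind // => h1.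
have [j hj] := P1 fs hfs.
exact: xle_trans (hi j) (xle_trans hj h1).
Qed.
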